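(* Let $\mathbf L$ be a locally compact non-discrete non-Archimedean field, $(X,\rho)$ an ultrametric space with completion $(\tilde X,\rho)$, $E\subset X$, and $P$ a uniform polyhedron over $\mathbf L$. Then each non-stretching mapping $f:E\to P$ has a non-stretching extension to $(\tilde X,\rho)$.
   Context: A map $f$ into $P\subset c_0(\mathbf L,A)$ is non-stretching if $\|f(x)-f(y)\|\le\rho(x,y)$. A simplex over $\mathbf L$ is a closed ball $x+\pi^kB(c_0(\mathbf L,A'),0,1)$ ($\pi$ of maximal absolute value $<1$, $k\in\mathbb Z$) in a coordinate subspace $c_0(\mathbf L,A')$ of the Banach space $c_0(\mathbf L,A)$ (families in $\mathbf L$ tending to zero, sup norm). A polyhedron is a disjoint union of simplexes $s_i$, $i\in F$; it is uniform if $\sup_i\mathrm{diam}(s_i)<\infty$ and $\inf_{i\ne j}\mathrm{dist}(s_i,s_j)>0$. *)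

(* Defs.v *)
From HB Require Import structures.
From mathcomp Require Import all_boot all_order all_algebra.
From mathcomp Require Import all_classical reals.
Set Implicit Arguments. Unset Strict Implicit. Unset Printing Implicit Defensive.
Import Order.TTheory GRing.Theory Num.Theory.
Local Open Scope ring_scope.
Local Open Scope classical_set_scope.

Definition ultrametric (R : realType) (X : Type) (rho : X -> X -> R) : Prop :=
  [/\ (forall x y, 0 <= rho x y),
      (forall x y, rho x y = 0 <-> x = y),
      (forall x y, rho x y = rho y x) &
      (forall x y z, rho x z <= Num.max (rho x y) (rho y z))].

Definition cauchy_seq (R : realType) (X : Type) (rho : X -> X -> R)
  (u : nat -> X) : Prop :=
  forall eps : R, 0 < eps -> exists N, forall m n, (N <= m)%N -> (N <= n)%N ->
    rho (u m) (u n) < eps.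

Definition seq_converges (R : realType) (X : Type) (rho : X -> X -> R)
  (u : nat -> X) (l : X) : Prop :=
  forall eps : R, 0 < eps -> exists N, forall n, (N <= n)%N -> rho (u n) l < eps.

Definition complete_space (R : realType) (X : Type) (rho : X -> X -> R) : Prop :=
  forall u, cauchy_seq rho u -> exists l, seq_converges rho u l.

Definition is_completion (R : realType) (X Xt : Type) (rho : X -> X -> R)
  (rhot : Xt -> Xt -> R) (iota : X -> Xt) : Prop :=
  [/\ complete_space rhot,
      (forall x y, rhot (iota x) (iota y) = rho x y) &
      (forall y (eps : R), 0 < eps -> exists x, rhot y (iota x) < eps)].

Definition nonarch_abs (R : realType) (L : fieldType) (v : L -> R) : Prop :=
  [/\ (forall x, v x = 0 <-> x = 0),
      (forall x y, v (x * y) = v x * v y) &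
      (forall x y, v (x + y) <= Num.max (v x) (v y))].

(* the induced topology is non-discrete, i.e. the absolute value is nontrivial *)
Definition nondiscrete_abs (R : realType) (L : fieldType) (v : L -> R) : Prop :=
  exists x, 0 < v x /\ v x != 1.

(* locally compact: some closed ball B(0,r), r > 0, is compact
   (for the metric |x - y|, compactness = sequential compactness) *)
Definition locally_compact_abs (R : realType) (L : fieldType) (v : L -> R) : Prop :=
  exists r : R, 0 < r /\
    forall u : nat -> L, (forall n, v (u n) <= r) ->
      exists (phi : nat -> nat) (l : L),
        (forall n, (phi n < phi n.+1)%N) /\ v l <= r /\
        seq_converges (fun a b => v (a - b)) (u \o phi) l.

Definition uniformizer (R : realType) (L : fieldType) (v : L -> R) (pi : L) : Prop :=
  v pi < 1 /\ forall x, v x < 1 -> v x <= v pi.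

Definition c0 (R : realType) (L : fieldType) (v : L -> R) (A : Type)
  : set (A -> L) :=
  [set x | forall eps : R, 0 < eps -> finite_set [set a | eps < v (x a)]].

Definition c0_sub (R : realType) (L : fieldType) (v : L -> R) (A : Type)
  (A' : set A) : set (A -> L) :=
  [set x | c0 v x /\ forall a, ~ A' a -> x a = 0].

Definition c0_norm (R : realType) (L : fieldType) (v : L -> R) (A : Type)
  (x : A -> L) : R := sup [set v (x a) | a in [set: A]].

Definition simplex (R : realType) (L : fieldType) (v : L -> R) (A : Type)
  (S : set (A -> L)) : Prop :=
  exists (A' : set A) (x : A -> L) (pi : L) (k : int),
    [/\ c0_sub v A' x, uniformizer v pi &
        S = [set (fun a => x a + pi ^ k * z a) | z in
              [set z | c0_sub v A' z /\ c0_norm v z <= 1]]].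

Definition polyhedron_of (R : realType) (L : fieldType) (v : L -> R) (A : Type)
  (F : Type) (s : F -> set (A -> L)) (P : set (A -> L)) : Prop :=
  [/\ (forall i, simplex v (s i)),
      (forall i j, i <> j -> s i `&` s j = set0) &
      P = \bigcup_(i in [set: F]) s i].

Definition uniform_polyhedron (R : realType) (L : fieldType) (v : L -> R)
  (A : Type) (P : set (A -> L)) : Prop :=
  exists (F : Type) (s : F -> set (A -> L)),
    [/\ polyhedron_of v s P,
        (exists M : R, forall i x y, s i x -> s i y ->
            c0_norm v (fun a => x a - y a) <= M) &
        (exists delta : R, 0 < delta /\ forall i j x y, i <> j -> s i x -> s j y ->
            delta <= c0_norm v (fun a => x a - y a))].

Definition non_stretching (R : realType) (L : fieldType) (v : L -> R) (A T : Type)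
  (d : T -> T -> R) (D : set T) (f : T -> A -> L) : Prop :=
  forall x y, D x -> D y -> c0_norm v (fun a => f x a - f y a) <= d x y.

(* Main.v *)
From HB Require Import structures.
From mathcomp Require Import all_boot all_order all_algebra.
From mathcomp Require Import all_classical reals.
From mathcomp Require Import lra finmap.
Require Import Defs.
Import Order.TTheory GRing.Theory Num.Theory.
Local Open Scope ring_scope.
Local Open Scope classical_set_scope.

Lemma bern (R : realType) (h : R) n : 0 <= h -> 1 + n%:R * h <= (1 + h) ^+ n.
Proof.
move=> h0; elim: n => [|n IH]; first by rewrite mul0r addr0 expr0.
rewrite exprS -natr1 mulrDl mul1r.
have hn : 0 <= n%:R * h by apply: mulr_ge0.
have : (1 + h) * (1 + n%:R * h) <= (1 + h) * (1 + h) ^+ n.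
  by apply: ler_wpM2l => //; lra.
set a := n%:R * h; set b := (1 + h) ^+ n. move=> H.
have : 0 <= h * a by apply: mulr_ge0.
nra.
Qed.

Lemma geom (R : realType) (q : R) : 0 < q -> q < 1 ->
  forall eps c : R, 0 < eps -> exists n, q ^+ n * c < eps.
Proof.
move=> q0 q1 eps c e0.
have [c0|c0] := leP c 0.
  by exists 0%N; rewrite expr0 mul1r; lra.
set h := q^-1 - 1.
have h0 : 0 < h by rewrite /h subr_gt0 invf_gt1.
set x := c / (eps * h).
have x0 : 0 <= x by rewrite /x; apply: divr_ge0; [lra| apply: mulr_ge0; lra].
have := archi_boundP x0; set n := Num.bound x => hn.
exists n.
have hb := @bern _ h n (ltW h0).
have e1 : 1 + h = q^-1 by rewrite /h; lra.
rewrite e1 in hb.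
have qn0 : 0 < q ^+ n by apply: exprn_gt0.
have : c < eps * h * n%:R.
  by rewrite -ltr_pdivrMl ?mulr_gt0 // mulrC.
move=> H1.
have : c < eps * q^-1 ^+ n.
  apply: (lt_le_trans H1); rewrite -mulrA ler_pM2l //.
  apply: le_trans hb; rewrite mulrC; lra.
rewrite exprVn => H2.
have : q ^+ n * c < q ^+ n * (eps * (q ^+ n)^-1) by rewrite ltr_pM2l.
by rewrite mulrCA mulfV ?mulr1 // gt_eqF.
Qed.

Lemma seq_ub (R : realType) (s : seq R) : exists M, forall t, t \in s -> t <= M.
Proof.
elim: s => [|y s [M hM]]; first by exists 0.
exists (Num.max y M) => t; rewrite in_cons => /orP[/eqP->|/hM h].
  by rewrite le_max lexx.
by rewrite le_max h orbT.
Qed.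

Lemma incr_ge (phi : nat -> nat) : (forall n, (phi n < phi n.+1)%N) ->
  forall k, (k <= phi k)%N.
Proof. move=> h; elim=> [|k IH] //; exact: leq_ltn_trans IH (h k). Qed.

Section Basics.
Variables (R : realType) (L : fieldType) (v : L -> R).
Hypothesis vabs : nonarch_abs v.
Variable A : Type.

Lemma norm_le (x : A -> L) r : 0 <= r -> (forall a, v (x a) <= r) ->
  c0_norm v x <= r.
Proof.
move=> r0 h; rewrite /c0_norm.
set S := [set v (x a) | a in [set: A]].
have [Sne|nS] := pselect (S !=set0).
  by apply: ge_sup => // t [a _ <-].
have -> : S = set0 by apply/seteqP; split=> t // St; apply: nS; exists t.
by rewrite sup0.
Qed.

Lemma norm_ub (x : A -> L) a : (exists M, forall b, v (x b) <= M) ->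
  v (x a) <= c0_norm v x.
Proof.
move=> [M hM]; rewrite /c0_norm; apply: ub_le_sup; last by exists a.
by exists M => t [b _ <-].
Qed.

Lemma c0_bnd (x : A -> L) : c0 v x -> exists M, forall a, v (x a) <= M.
Proof.
move=> hx; have fin := hx 1 ltr01.
have := finite_image (fun a => v (x a)) fin.
case/finite_fsetP => X hX.
have [M hM] := @seq_ub _ (finmap.enum_fset X).
exists (Num.max 1 M) => a.
have [h|h] := leP (v (x a)) 1; first by rewrite le_max h.
have : [set` X] (v (x a)) by rewrite -hX; exists a.
by move=> /= /hM hm; rewrite le_max hm orbT.
Qed.


Lemma v0 : v 0 = 0.
Proof. by case: vabs => H _ _; apply/H. Qed.

Lemma v_eq0 x : v x = 0 -> x = 0.
Proof. by case: vabs => H _ _; move/H. Qed.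

Lemma vM x y : v (x * y) = v x * v y.
Proof. by case: vabs. Qed.

Lemma vD x y : v (x + y) <= Num.max (v x) (v y).
Proof. by case: vabs. Qed.

Lemma v1 : v 1 = 1.
Proof.
have h : v 1 = v 1 * v 1 by rewrite -vM mulr1.
have h1 : v 1 != 0 by apply/eqP => /v_eq0 /eqP; rewrite oner_eq0.
by move: h => /(congr1 (fun t => t / v 1)); rewrite mulfK // divff.
Qed.

Lemma vN1 : v (-1) = 1 \/ v (-1) = -1.
Proof.
have : v (-1) ^+ 2 = 1 by rewrite expr2 -vM mulrNN mulr1 v1.
by move/eqP; rewrite sqrf_eq1 => /orP[/eqP->|/eqP->]; [left|right].
Qed.

Lemma vV x : x != 0 -> v (x^-1) = (v x)^-1.
Proof.
move=> x0; have h : v x * v (x^-1) = 1 by rewrite -vM divff // v1.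
have vx0 : v x != 0 by apply/eqP => /v_eq0 /eqP; rewrite (negbTE x0).
by apply: (mulfI vx0); rewrite h mulfV.
Qed.

Lemma vXn x n : v (x ^+ n) = v x ^+ n.
Proof. by elim: n => [|n IH]; rewrite ?expr0 ?v1 // !exprS vM IH. Qed.

Hypothesis nd : nondiscrete_abs v.

Lemma unif_gt0 p : uniformizer v p -> 0 < v p.
Proof.
case=> p1 pmax; case: nd => x [x0 x1].
case: (ltgtP (v x) 1) => h.
- exact: lt_le_trans x0 (pmax _ h).
- have xn0 : x != 0 by apply/eqP => ex; move: x0; rewrite ex v0 // ltxx //.
  have h2 : v (x^-1) < 1 by rewrite vV // invf_lt1.
  apply: lt_le_trans (pmax _ h2); rewrite vV // invr_gt0 //.
- by move: x1; rewrite h eqxx.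
Qed.

Lemma unif_neq0 p : uniformizer v p -> p != 0.
Proof. move=> up; apply/eqP => e; have := @unif_gt0 p up; rewrite e v0 // ltxx //. Qed.

Variable pi : L.
Hypothesis upi : uniformizer v pi.

Lemma pi_gt0 : 0 < v pi.
Proof. exact: unif_gt0. Qed.

Lemma pi_lt1 : v pi < 1.
Proof. by case: upi. Qed.

Lemma pi_neq0 : pi != 0.
Proof. exact: unif_neq0. Qed.


Lemma neg_P0 (F : Type) (s : F -> set (A -> L)) (M : R) :
  v (-1) = -1 -> (forall i, simplex v (s i)) ->
  (forall i x y, s i x -> s i y -> c0_norm v (fun a => x a - y a) <= M) ->
  forall i x, s i x -> x = (fun _ => 0).
Proof.
move=> vm hs hM i x sx.
have [A' [x0 [p [k [[cx0 x0o] up es]]]]] := hs i.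
have vp := unif_gt0 _ up.
have p0 := unif_neq0 _ up.
pose pk := p ^ k.
have pk0 : pk != 0 by apply: expfz_neq0.
have vpkG : forall kk : int, 0 < v (p ^ kk).
  case=> n /=.
    by rewrite -exprnP vXn exprn_gt0.
  by rewrite vV ?expf_neq0 // vXn invr_gt0 exprn_gt0.
have vpk : 0 < v pk := vpkG k.
have nA : forall a0, ~ A' a0.
  move=> a0 Aa0.
  have [n hn] := @geom _ _ pi_gt0 pi_lt1 1 (Num.max M 1) ltr01.
  pose y := (pi ^+ n)^-1.
  have vpn : 0 < v pi ^+ n by rewrite exprn_gt0 // pi_gt0.
  have vy : v y = (v pi ^+ n)^-1 by rewrite /y vV ?expf_neq0 ?pi_neq0 // vXn.
  have My : M < v y.
    have h : Num.max M 1 < (v pi ^+ n)^-1.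
      by rewrite -(ltr_pM2l vpn) mulfV ?gt_eqF // mulrC.
    by rewrite vy; apply: le_lt_trans h; rewrite le_max lexx.
  pose z0 := fun _ : A => (0 : L).
  pose z2 := fun a => if `[< a = a0 >] then - (pk^-1 * y) else 0.
  have hz0 : c0_sub v A' z0 /\ c0_norm v z0 <= 1.
    split; [split|].
    - move=> eps e0; apply: sub_finite_set (finite_set0 A) => a /= h.
      by move: h; rewrite /z0 v0 ltNge (ltW e0).
    - by [].
    - by apply: norm_le => // a; rewrite /z0 v0 ler01.
  have vz2 : forall a, v (z2 a) <= 0.
    move=> a; rewrite /z2; case: ifP => _; last by rewrite v0.
    rewrite -mulN1r vM vm vM vV // mulN1r oppr_le0; apply: mulr_ge0.
      by rewrite invr_ge0 ltW.
    by rewrite vy invr_ge0 ltW.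
  have hz2 : c0_sub v A' z2 /\ c0_norm v z2 <= 1.
    split; [split|].
    - move=> eps e0; apply: sub_finite_set (finite_set0 A) => a /= h.
      by have := le_lt_trans (vz2 a) (lt_trans e0 h); rewrite ltxx.
    - move=> a na; rewrite /z2 asboolF // => ea; apply: na; rewrite ea; exact: Aa0.
    - by apply: norm_le => // a; apply: le_trans (vz2 a) ler01.
  have s1 : s i (fun a => x0 a + p ^ k * z0 a) by rewrite es; exists z0.
  have s2 : s i (fun a => x0 a + p ^ k * z2 a) by rewrite es; exists z2.
  have HM := hM i _ _ s1 s2.
  have dE : forall a, (x0 a + p ^ k * z0 a) - (x0 a + p ^ k * z2 a) =
      if `[< a = a0 >] then y else 0.
    move=> a; rewrite /z0 /z2; case: ifP => _.
      by rewrite mulr0 addr0 opprD addrA subrr add0r mulrN opprK (mulVKf pk0).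
    by rewrite mulr0 addr0 subrr.
  have ub : v y <= c0_norm v
      (fun a => (x0 a + p ^ k * z0 a) - (x0 a + p ^ k * z2 a)).
    have := norm_ub (fun a => (x0 a + p ^ k * z0 a) - (x0 a + p ^ k * z2 a)) a0.
    rewrite /= dE asboolT //; apply.
    exists (Num.max (v y) 0) => b; rewrite dE; case: ifP => _.
      by rewrite le_max lexx.
    by rewrite v0 le_max lexx orbT.
  by have := lt_le_trans My (le_trans ub HM); rewrite ltxx.
move: sx; rewrite es => -[w [[cw wo] _] <-].
by apply: funext => a; rewrite x0o ?wo ?mulr0 ?addr0 //; apply: nA.
Qed.

Section Pos.
Hypothesis vN1p : v (-1) = 1.

Lemma vN x : v (- x) = v x.
Proof. by rewrite -mulN1r vM vN1p mul1r. Qed.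

Lemma v_ge0 x : 0 <= v x.
Proof.
have := vD x (- x); rewrite subrr v0 vN.
by rewrite le_max => /orP[].
Qed.

Lemma vBC x y : v (x - y) = v (y - x).
Proof. by rewrite -vN opprB. Qed.

Lemma vtri x y z : v (x - z) <= Num.max (v (x - y)) (v (y - z)).
Proof. by have := vD (x - y) (y - z); rewrite addrA subrK. Qed.

Lemma v_gt0 x : x != 0 -> 0 < v x.
Proof.
move=> x0; rewrite lt_neqAle v_ge0 andbT eq_sym; apply/eqP => /v_eq0 /eqP.
by rewrite (negbTE x0).
Qed.

Lemma gap a b : v b < v a -> v b <= v pi * v a.
Proof.
move=> hab.
have va0 : 0 < v a by apply: le_lt_trans hab; exact: v_ge0.
have a0 : a != 0 by apply/eqP => e; move: va0; rewrite e v0 // ltxx //.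
have h1 : v (b * a^-1) < 1 by rewrite vM // vV // ltr_pdivrMr // mul1r.
case: upi => _ pmax; have := pmax _ h1.
rewrite vM // vV // ler_pdivrMr //.
Qed.

Hypothesis lc : locally_compact_abs v.

Lemma complete_L (u : nat -> L) : cauchy_seq (fun a b => v (a - b)) u ->
  exists l, seq_converges (fun a b => v (a - b)) u l.
Proof.
move=> cu; case: lc => r [r0 lcH].
have [N1 hN1] := cu 1 ltr01.
set B := Num.max 1 (v (u N1)).
have hB : forall n, (N1 <= n)%N -> v (u n) <= B.
  move=> n hn; have := vD (u n - u N1) (u N1); rewrite subrK => h.
  apply: (le_trans h); rewrite ge_max !le_max lexx orbT andbT.
  by rewrite ltW // hN1.
have [k hk] := @geom _ _ pi_gt0 pi_lt1 r B r0.
set c := pi ^+ k.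
have c0 : c != 0 by rewrite expf_neq0 // pi_neq0.
have vc : v c = v pi ^+ k by rewrite vXn.
have vc0 : 0 < v c by apply: v_gt0.
set w := fun n => c * u (N1 + n)%N.
have hw : forall n, v (w n) <= r.
  move=> n; rewrite /w vM // vc; apply: ltW; apply: le_lt_trans hk.
  by rewrite ler_pM2l ?exprn_gt0 ?pi_gt0 // hB // leq_addr.
have [phi [l [phiI [_ conv]]]] := lcH w hw.
exists (c^-1 * l) => eps e0.
have [N2 hN2] := cu eps e0.
have [N3 hN3] := conv (eps * v c) (mulr_gt0 e0 vc0).
set kk := maxn N2 N3.
set idx := (N1 + phi kk)%N.
have hidx : (N2 <= idx)%N.
  have a := leq_maxl N2 N3; have b := @incr_ge phi phiI kk.
  exact: (leq_trans a (leq_trans b (leq_addl _ _))).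
have h1 : v (u idx - c^-1 * l) < eps.
  have -> : u idx - c^-1 * l = c^-1 * (w (phi kk) - l).
    by rewrite /w mulrBr mulrA mulVf // mul1r.
  rewrite vM // vV // -ltr_pdivlMl ?invr_gt0 // invrK mulrC.
  by apply: hN3; exact: leq_maxr.
exists N2 => n hn.
apply: le_lt_trans (vtri _ (u idx) _) _.
by rewrite gt_max h1 andbT hN2.
Qed.


Definition cl (z w : A -> L) (r : R) := forall a, v (z a - w a) <= r.

Lemma small_seq (X : Type) (E : set X) (h : X -> R) :
  (forall eps, 0 < eps -> exists e, E e /\ h e < eps) ->
  exists en : nat -> X, (forall n, E (en n)) /\
    forall eps, 0 < eps -> exists N, forall n, (N <= n)%N -> h (en n) < eps.
Proof.
move=> hs.
have : forall n : nat, exists e, E e /\ h e < v pi ^+ n.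
  by move=> n; apply: hs; apply: exprn_gt0; exact: pi_gt0.
case/choice => en hen.
exists en; split; first by move=> n; case: (hen n).
move=> eps e0; have [N hN] := @geom _ _ pi_gt0 pi_lt1 eps 1 e0.
rewrite mulr1 in hN.
exists N => n hn; case: (hen n) => _ h1; apply: (lt_le_trans h1).
apply: ltW; apply: le_lt_trans hN.
by apply: ler_wiXn2l => //; [exact: ltW pi_gt0 | exact: ltW pi_lt1].
Qed.

Lemma core (X : Type) (E : set X) (P : set (A -> L)) (f : X -> A -> L)
  (h : X -> R) (F : Type) (s : F -> set (A -> L)) (delta : R) :
  (forall i, simplex v (s i)) -> P = \bigcup_(i in [set: F]) s i ->
  0 < delta ->
  (forall i j x y, i <> j -> s i x -> s j y ->
     delta <= c0_norm v (fun a => x a - y a)) ->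
  (forall e, E e -> P (f e)) ->
  (forall e e', E e -> E e' -> cl (f e) (f e') (Num.max (h e) (h e'))) ->
  (forall e, E e -> 0 <= h e) ->
  E !=set0 -> exists z, P z /\ forall e, E e -> cl z (f e) (h e).
Proof.
move=> hs hPs d0 hsep hfP hcomp h0 [e1 Ee1].
have [[e0 [Ee0 He0]]|nI] :=
  pselect (exists e0, E e0 /\ forall e, E e -> cl (f e0) (f e) (h e)).
  by exists (f e0); split => //; apply: hfP.
have step : forall e0, E e0 -> exists e, E e /\ exists t, h e < v t /\ v t <= h e0.
  move=> e0 Ee0.
  have [e [Ee ne]] : exists e, E e /\ ~ cl (f e0) (f e) (h e).
    apply: contrapT => H; apply: nI; exists e0; split => // e Ee.
    by apply: contrapT => nc; apply: H; exists e.
  have [a na] : exists a, ~ (v (f e0 a - f e a) <= h e).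
    by apply: contrapT => H; apply: ne => a; apply: contrapT => nc; apply: H; exists a.
  move/negP: na; rewrite -ltNge => lt1.
  exists e; split => //; exists (f e0 a - f e a); split => //.
  have := hcomp _ _ Ee0 Ee a; rewrite le_max => /orP[//|h2].
  by move: lt1; rewrite ltNge h2.
have small : forall eps, 0 < eps -> exists e, E e /\ h e < eps.
  have : forall e0, exists p : X * L,
      E e0 -> E p.1 /\ h p.1 < v p.2 /\ v p.2 <= h e0.
    move=> e0; have [Ee0|nE] := pselect (E e0).
      by have [e [Ee [t [t1 t2]]]] := step e0 Ee0; exists (e, t).
    by exists (e0, 0).
  case/choice => nx hnx.
  pose sq := fun n => iter n (fun e => (nx e).1) e1.
  have Esq : forall n, E (sq n).
    by elim=> [|n IH] //=; case: (hnx _ IH).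
  pose T := fun n => (nx (sq n)).2.
  have hT : forall n, h (sq n.+1) < v (T n) /\ v (T n) <= h (sq n).
    by move=> n; case: (hnx _ (Esq n)) => _ [].
  have bT : forall n, v (T n) <= v pi ^+ n * v (T 0%N).
    elim=> [|n IH]; first by rewrite expr0 mul1r.
    have [a1 a2] := hT n; have [b1 b2] := hT n.+1.
    have lt : v (T n.+1) < v (T n) by apply: le_lt_trans b2 a1.
    apply: le_trans (gap _ _ lt) _; rewrite exprS -mulrA ler_pM2l //; exact: pi_gt0.
  move=> eps e0; have [n hn] := @geom _ _ pi_gt0 pi_lt1 eps (v (T 0%N)) e0.
  exists (sq n.+1); split => //.
  exact: lt_trans (proj1 (hT n)) (le_lt_trans (bT n) hn).
have [en [Een ten]] := @small_seq X E h small.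
have : forall a, exists l,
    seq_converges (fun x y => v (x - y)) (fun n => f (en n) a) l.
  move=> a; apply: complete_L => eps e0.
  have [N hN] := ten eps e0; exists N => m n hm hn.
  apply: le_lt_trans (hcomp _ _ (Een m) (Een n) a) _.
  by rewrite gt_max !hN.
case/choice => z hz.
have cz : forall e, E e -> cl z (f e) (h e).
  move=> e Ee a; rewrite leNgt; apply/negP => lt1.
  set V := v (z a - f e a) in lt1.
  have V0 : 0 < V by apply: le_lt_trans (h0 _ Ee) lt1.
  have [N1 hN1] := hz a V V0.
  have [N2 hN2] := ten V V0.
  pose n := maxn N1 N2.
  have c1 : v (z a - f (en n) a) < V.
    by rewrite vBC; apply: hN1; exact: leq_maxl.
  have c2 : v (f (en n) a - f e a) < V.
    apply: le_lt_trans (hcomp _ _ (Een n) Ee a) _.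
    by rewrite gt_max lt1 andbT; apply: hN2; exact: leq_maxr.
  have H := vtri (z a) (f (en n) a) (f e a).
  have : V < V by apply: le_lt_trans H _; rewrite gt_max c1 c2.
  by rewrite ltxx.
exists z; split => //.
have le_tail : forall N0 t b, 0 <= b ->
    (forall n, (N0 <= n)%N -> t <= Num.max (h (en n)) b) -> t <= b.
  move=> N0 t b b0 Ht; rewrite leNgt; apply/negP => bt.
  have t0 : 0 < t by apply: le_lt_trans bt.
  have [N1 hN1] := ten t t0.
  have := Ht (maxn N0 N1) (leq_maxl _ _).
  by rewrite le_max !leNgt bt hN1 // leq_maxr.
have [N hN] := ten delta d0.
have : P (f (en N)) by apply: hfP.
rewrite hPs => -[i _ si].
have sameS : forall n, (N <= n)%N -> s i (f (en n)).
  move=> n hn; have : P (f (en n)) by apply: hfP.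
  rewrite hPs => -[j _ sj].
  have [eij|nij] := pselect (j = i); first by rewrite -eij.
  have H2 := hsep _ _ _ _ nij sj si.
  have H1 : c0_norm v (fun a => f (en n) a - f (en N) a) <=
            Num.max (h (en n)) (h (en N)).
    by apply: norm_le; [rewrite le_max h0 | exact: hcomp].
  have := le_trans H2 H1.
  by rewrite le_max !leNgt (hN n hn) (hN N (leqnn N)).
have [A' [x0 [p [k [cx0 up es]]]]] := hs i.
exists i => //; rewrite es.
rewrite es in sameS.
pose pk := p ^ k.
have pk0 : pk != 0 by apply: expfz_neq0; exact: unif_neq0.
have vpk0 : 0 < v pk by apply: v_gt0.
have hzn : forall n a, v (z a - f (en n) a) <= h (en n).
  by move=> n a; apply: cz.
pose W := fun a => pk^-1 * (z a - x0 a).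
have fW : forall n a w, (fun a => x0 a + p ^ k * w a) = f (en n) ->
    f (en n) a = x0 a + pk * w a.
  by move=> n a w ew; rewrite -ew.
have Wout : forall a, ~ A' a -> W a = 0.
  move=> a na.
  have : v (z a - x0 a) <= 0.
    apply: (le_tail N) => // n hn.
    have [w [[_ wo] _] ew] := sameS n hn.
    have e2 : f (en n) a = x0 a by rewrite (fW _ a _ ew) wo // mulr0 addr0.
    by rewrite -e2 le_max hzn.
  move=> H; have : v (z a - x0 a) = 0 by apply/eqP; rewrite eq_le H v_ge0.
  by move/v_eq0 => e3; rewrite /W e3 mulr0.
have Wle : forall a, v (W a) <= 1.
  move=> a.
  have : v (z a - x0 a) <= v pk.
    apply: (le_tail N); first exact: ltW.
    move=> n hn; have [w [[cw _] nw] ew] := sameS n hn.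
    apply: le_trans (vtri _ (f (en n) a) _) _.
    rewrite ge_max !le_max hzn //=.
    rewrite (fW _ a _ ew) addrC addKr vM.
    have : v (w a) <= 1.
      apply: le_trans nw; apply: norm_ub; exact: c0_bnd.
    move=> H; rewrite orbC; apply/orP; left.
    by rewrite -{2}[v pk]mulr1 ler_pM2l.
  by move=> H; rewrite /W vM vV // ler_pdivrMl // mulr1.
have Wc0 : c0 v W.
  move=> eps e0.
  have [N1 hN1] := ten (eps * v pk) (mulr_gt0 e0 vpk0).
  pose n := maxn N N1.
  have [w [[cw _] nw] ew] := sameS n (leq_maxl _ _).
  apply: sub_finite_set (cw eps e0) => a /= ea.
  have d1 : v (W a - w a) < eps.
    have -> : W a - w a = pk^-1 * (z a - f (en n) a).
      by rewrite (fW _ a _ ew) /W opprD addrA [in RHS]mulrBr mulKf.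
    rewrite vM vV // -ltr_pdivlMl ?invr_gt0 // invrK mulrC.
    by apply: le_lt_trans (hzn n a) _; apply: hN1; exact: leq_maxr.
  rewrite ltNge; apply/negP => wle.
  have := vD (w a) (W a - w a); rewrite addrC subrK => H.
  have : v (W a) <= eps.
    by apply: le_trans H _; rewrite ge_max wle (ltW d1).
  by rewrite leNgt ea.
exists W; first split.
- by split => //.
- by apply: norm_le => //.
apply: funext => a; rewrite /W /pk mulVKf; last exact: pk0.
by rewrite addrC subrK.
Qed.

Lemma simplex_bnd (S : set (A -> L)) x : simplex v S -> S x ->
  exists M, forall a, v (x a) <= M.
Proof.
move=> [A' [x0 [p [k [[cx0 _] up ->]]]]] [w [[cw _] _] <-].
have [M1 h1] := c0_bnd _ cx0; have [M2 h2] := c0_bnd _ cw.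
exists (Num.max M1 (v (p ^ k) * M2)) => a.
apply: le_trans (vD _ _) _; rewrite ge_max !le_max h1 /= vM.
by apply/orP; right; apply: ler_wpM2l; [exact: v_ge0 | exact: h2].
Qed.

Lemma diff_bnd (x y : A -> L) : (exists M, forall a, v (x a) <= M) ->
  (exists M, forall a, v (y a) <= M) ->
  exists M, forall a, v (x a - y a) <= M.
Proof.
move=> [M1 h1] [M2 h2]; exists (Num.max M1 M2) => a.
apply: le_trans (vD _ _) _; rewrite vN ge_max !le_max h1 h2 /= orbT //.
Qed.

Lemma main_pos (X Xt : Type) (rho : X -> X -> R) (rhot : Xt -> Xt -> R)
  (iota : X -> Xt) (E : set X) (P : set (A -> L)) (f : X -> A -> L)
  (F : Type) (s : F -> set (A -> L)) (delta : R) :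
  ultrametric rhot -> (forall x y, rhot (iota x) (iota y) = rho x y) ->
  (forall i, simplex v (s i)) -> P = \bigcup_(i in [set: F]) s i ->
  0 < delta ->
  (forall i j x y, i <> j -> s i x -> s j y ->
     delta <= c0_norm v (fun a => x a - y a)) ->
  P !=set0 ->
  (forall e, E e -> P (f e)) -> non_stretching v rho E f ->
  exists g : Xt -> A -> L,
    [/\ (forall y, P (g y)),
        (forall e, E e -> g (iota e) = f e) &
        non_stretching v rhot [set: Xt] g].
Proof.
move=> [r0 r_eq rsym rtri] iso hs hPs d0 hsep [p0 Pp0] hfP hf.
have Pbnd : forall x, P x -> exists M, forall a, v (x a) <= M.
  by move=> x; rewrite hPs => -[i _ si]; apply: simplex_bnd (hs i) si.
have clf : forall e e', E e -> E e' -> cl (f e) (f e') (rho e e').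
  move=> e e' Ee Ee' a; apply: le_trans (hf _ _ Ee Ee').
  by apply: norm_ub; apply: diff_bnd; apply: Pbnd; apply: hfP.
pose Cand := fun y => [set z | P z /\ forall e, E e -> cl z (f e) (rhot y (iota e))].
have Cne : forall y, Cand y !=set0.
  move=> y; have [[e1 Ee1]|nE] := pselect (E !=set0).
    have hc : forall e e', E e -> E e' -> cl (f e) (f e')
        (Num.max (rhot y (iota e)) (rhot y (iota e'))).
      move=> e e' Ee Ee' a; apply: le_trans (clf _ _ Ee Ee' a) _.
      rewrite -iso; apply: le_trans (rtri _ y _) _.
      by rewrite rsym.
    have [z [Pz cz]] := @core X E P f (fun e => rhot y (iota e)) F s delta
       hs hPs d0 hsep hfP hc (fun e _ => r0 _ _) (ex_intro _ e1 Ee1).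
    by exists z.
  exists p0; split => // e Ee; exfalso; apply: nE; by exists e.
have : forall S : set (A -> L), exists z, S !=set0 -> S z.
  move=> S; have [[z Sz]|nS] := pselect (S !=set0); first by exists z.
  by exists p0.
case/choice => sel hsel.
exists (fun y => sel (Cand y)); split.
- by move=> y; case: (hsel _ (Cne y)).
- move=> e Ee; case: (hsel _ (Cne (iota e))) => _ /(_ e Ee) H.
  apply: funext => a; have := H a.
  have -> : rhot (iota e) (iota e) = 0 by apply/r_eq.
  move=> H2; have : v (sel (Cand (iota e)) a - f e a) = 0.
    by apply/eqP; rewrite eq_le H2 v_ge0.
  by move/v_eq0/eqP; rewrite subr_eq0 => /eqP.
move=> y y' _ _; apply: norm_le; first exact: r0.
set r := rhot y y'.
have same : forall y1 y2, rhot y1 y2 = r ->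
    (forall e, E e -> r < rhot y1 (iota e)) -> Cand y1 = Cand y2.
  move=> y1 y2 ry H.
  have E1 : forall e, E e -> rhot y2 (iota e) = rhot y1 (iota e).
    move=> e Ee; apply/eqP; rewrite eq_le; apply/andP; split.
      apply: le_trans (rtri _ y1 _) _; rewrite rsym ry ge_max lexx andbT.
      exact: ltW (H e Ee).
    have := rtri y1 y2 (iota e); rewrite ry le_max => /orP[h1|//].
    by move: (H e Ee); rewrite ltNge h1.
  apply/seteqP; split => z [Pz cz]; split => // e Ee.
    by rewrite E1 //; apply: cz.
  by rewrite -E1 //; apply: cz.
have [H1|n1] := pselect (forall e, E e -> r < rhot y (iota e)).
  by rewrite (same y y' erefl H1) => a; rewrite subrr v0; exact: r0.
have [H2|n2] := pselect (forall e, E e -> r < rhot y' (iota e)).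
  have ry : rhot y' y = r by rewrite rsym.
  by rewrite (same y' y ry H2) => a; rewrite subrr v0; exact: r0.
have [e [Ee he]] : exists e, E e /\ rhot y (iota e) <= r.
  apply: contrapT => nn; apply: n1 => e Ee; rewrite ltNge; apply/negP => hh.
  by apply: nn; exists e.
have [e' [Ee' he']] : exists e, E e /\ rhot y' (iota e) <= r.
  apply: contrapT => nn; apply: n2 => e2 Ee2; rewrite ltNge; apply/negP => hh.
  by apply: nn; exists e2.
move=> a.
case: (hsel _ (Cne y)) => _ c1; case: (hsel _ (Cne y')) => _ c2.
have k1 : v (sel (Cand y) a - f e a) <= r := le_trans (c1 e Ee a) he.
have k2 : v (f e' a - sel (Cand y') a) <= r.
  by rewrite vBC; exact: le_trans (c2 e' Ee' a) he'.
have k3 : v (f e a - f e' a) <= r.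
  apply: le_trans (clf _ _ Ee Ee' a) _; rewrite -iso.
  apply: le_trans (rtri _ y _) _; rewrite ge_max rsym he /=.
  apply: le_trans (rtri _ y' _) _; rewrite ge_max he' andbT //.
apply: le_trans (vtri _ (f e a) _) _; rewrite ge_max k1 /=.
by apply: le_trans (vtri _ (f e' a) _) _; rewrite ge_max k2 k3.
Qed.

End Pos.
End Basics.

Theorem lemma2p14 (R : realType) (L : fieldType) (v : L -> R)
  (X : Type) (rho : X -> X -> R) (Xt : Type) (rhot : Xt -> Xt -> R)
  (iota : X -> Xt) (E : set X) (A : Type) (P : set (A -> L))
  (f : X -> A -> L) :
  nonarch_abs v -> nondiscrete_abs v -> locally_compact_abs v ->
  ultrametric rho -> ultrametric rhot -> is_completion rho rhot iota ->
  uniform_polyhedron v P -> P !=set0 ->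
  (forall e, E e -> P (f e)) -> non_stretching v rho E f ->
  exists g : Xt -> A -> L,
    [/\ (forall y, P (g y)),
        (forall e, E e -> g (iota e) = f e) &
        non_stretching v rhot [set: Xt] g].
Proof.
move=> vabs nd lc urho urhot [_ iso _] [F [s [[hs _ hPs] [M hM] [delta [d0 hsep]]]]].
move=> Pne hfP hf.
have [p0 Pp0] := Pne.
have [i0 _ si0] : (\bigcup_(i in [set: F]) s i) p0 by rewrite -hPs.
have [_ [_ [pi [_ [_ upi _]]]]] := hs i0.
case: (@vN1 R L v vabs) => vm.
  exact: (@main_pos R L v vabs A nd pi upi vm lc X Xt rho rhot iota E P f F s
    delta urhot iso hs hPs d0 hsep Pne hfP hf).
have P0 : forall x, P x -> x = (fun _ => 0).
  move=> x; rewrite hPs => -[i _ si].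
  exact: (@neg_P0 R L v vabs A nd pi upi F s M vm hs hM i x si).
exists (fun _ _ => 0); split.
- by move=> _; rewrite -(P0 _ Pp0).
- by move=> e Ee; rewrite (P0 _ (hfP e Ee)).
- move=> y y' _ _; apply: (@norm_le R L v A).
    by case: urhot.
  by move=> a; rewrite subrr (@v0 R L v vabs); case: urhot.
Qed.
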